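(* Let $q$ be a prime power and $n\ge 3$. If $\mathcal{L}$ is a Cameron-Liebler $(n-2)$-set of $\mathrm{AG}(n,q)$ with parameter $x$, then $\frac{x(x-1)}{2}\equiv 0 \pmod{q+1}$.
   Context: $\mathrm{AG}(n,q)$ is $\mathrm{PG}(n,q)$ with a hyperplane $\pi_\infty$ removed; affine $k$-spaces are $k$-dimensional projective subspaces not contained in $\pi_\infty$. With $A_n$ the incidence matrix of affine points versus affine $k$-spaces, a set $\mathcal{L}$ of affine $k$-spaces is a Cameron-Liebler $k$-set of $\mathrm{AG}(n,q)$ if its characteristic vector lies in the real row space $\mathrm{Im}(A_n^T)$; its parameter is $|\mathcal{L}|/\left[{n\atop k}\right]_q$, where $\left[{a\atop b}\right]_q=\frac{(q^a-1)\cdots(q^{a-b+1}-1)}{(q^b-1)\cdots(q-1)}$. *)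

(* Defs.v *)
From HB Require Import structures.
From mathcomp Require Import all_boot all_order all_algebra.
From mathcomp Require Import reals.
Set Implicit Arguments. Unset Strict Implicit. Unset Printing Implicit Defensive.
Import Order.TTheory GRing.Theory Num.Theory.
Local Open Scope ring_scope.

(* AG(n,q) is modelled as the vector space 'rV[F]_n, F a finite field with
   q = #|F| elements. *)
Definition affine_kspace (F : finFieldType) (n k : nat) (S : {set 'rV[F]_n}) : bool :=
  [exists v : 'rV[F]_n, exists W : 'M[F]_n,
     (\rank W == k)%N && (S == [set x | (x - v <= W)%MS])].

(* Cameron-Liebler k-set: a set L of affine k-spaces whose characteristic
   vector lies in the real row space Im(A_n^T) of the point / k-space
   incidence matrix A_n, i.e. chi_L = A_n^T c for some real vector c
   indexed by the points: chi_L(S) = sum_{p in S} c_p. *)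
Definition CL_kset (R : realType) (F : finFieldType) (n k : nat)
  (L : {set {set 'rV[F]_n}}) : Prop :=
  (forall S, S \in L -> affine_kspace k S) /\
  exists c : 'rV[F]_n -> R,
    forall S, affine_kspace k S -> ((S \in L)%:R : R) = \sum_(p in S) c p.

Definition gauss_binom (R : realType) (q a b : nat) : R :=
  \prod_(i < b) (((q ^ (a - i))%:R - 1) / ((q ^ i.+1)%:R - 1)).

Definition CL_param (R : realType) (F : finFieldType) (n k : nat)
  (L : {set {set 'rV[F]_n}}) : R :=
  (#|L|%:R) / gauss_binom R #|F| n k.

(* Main.v *)
Require Import Defs.
From HB Require Import structures.
From mathcomp Require Import all_boot all_order all_algebra.
From mathcomp Require Import reals.
From mathcomp Require Import ring.
Set Implicit Arguments. Unset Strict Implicit. Unset Printing Implicit Defensive.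
Import Order.TTheory GRing.Theory Num.Theory.
Local Open Scope ring_scope.
Section Count.

Variable F : finFieldType.

Lemma card_fr (n m : nat) : (m <= n)%N ->
  #|[pred A : 'M[F]_(m, n) | \rank A == m]| =
   (\prod_(0 <= i < m) (#|F| ^ i * (#|F| ^ (n - i) - 1)))%N.
Proof.
set p := #|F|.
pose fr m := [pred A : 'M[F]_(m, n) | \rank A == m].
rewrite -/(fr m).
elim: m => [_ | m IHm /ltnW-le_mn].
  rewrite (@eq_card1 _ (0 : 'M_(0, n))) ?big_geq //= => A.
  by rewrite flatmx0 !inE mxrank.unlock !eqxx.
rewrite big_nat_recr // -{}IHm //= mulnBr muln1 -expnD subnKC //.
rewrite -sum_nat_const /= -sum1_card -add1n.
rewrite (partition_big dsubmx (fr m)) /= => [|A]; last first.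
  rewrite !inE -{1}(vsubmxK A); move: {A}(_ A) (_ A) => Ad Au Afull.
  rewrite eqn_leq rank_leq_row -(leq_add2l (\rank Au)) -mxrank_sum_cap.
  rewrite {1 3}[@mxrank]lock addsmxE (eqnP Afull) -lock -addnA.
  by rewrite leq_add ?rank_leq_row ?leq_addr.
apply: eq_bigr => A rAm; rewrite (reindex (col_mx^~ A)) /=; last first.
  exists usubmx => [v _ | vA]; first by rewrite col_mxKu.
  by case/andP=> _ /eqP <-; rewrite vsubmxK.
transitivity #|~: [set v *m A | v in 'rV_m]|; last first.
  rewrite cardsCs setCK card_imset ?card_mx ?card_ord ?mul1n //.
  have [B AB1] := row_freeP rAm; apply: can_inj (mulmx^~ B) _ => v.
  by rewrite -mulmxA AB1 mulmx1.
rewrite -sum1_card; apply: eq_bigl => v; rewrite !inE col_mxKd eqxx.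
rewrite andbT eqn_leq rank_leq_row /= -(leq_add2r (\rank (v :&: A)%MS)).
rewrite -addsmxE mxrank_sum_cap (eqnP rAm) addnAC leq_add2r.
rewrite (ltn_leqif (mxrank_leqif_sup _)) ?capmxSl // sub_capmx submx_refl.
by congr (~~ _); apply/submxP/imsetP=> [] [u]; exists u.
Qed.

Definition subsp m n (A : 'M[F]_(m, n)) : {set 'rV[F]_n} := [set x | (x <= A)%MS].

Lemma subspE m1 m2 n (A : 'M[F]_(m1, n)) (B : 'M[F]_(m2, n)) :
  (subsp A == subsp B) = (A == B)%MS.
Proof.
apply/eqP/andP => [E|[AB BA]]; last first.
  by apply/setP => x; rewrite !inE; apply/idP/idP => H;
    [apply: submx_trans AB | apply: submx_trans BA].
split; apply/row_subP => i.
  have : row i A \in subsp B by rewrite -E inE row_sub.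
  by rewrite inE.
have : row i B \in subsp A by rewrite E inE row_sub.
by rewrite inE.
Qed.

Lemma fiber k n (W : 'M[F]_n) : \rank W = k ->
  #|[set A : 'M[F]_(k, n) | (\rank A == k) && (subsp A == subsp W)]|
  = #|[set M : 'M[F]_k | \rank M == k]|.
Proof.
move=> rk; subst k.
set B0 := row_base W.
have fB0 : row_free B0 := row_base_free W.
have -> : [set A : 'M[F]_(\rank W, n) | (\rank A == \rank W) && (subsp A == subsp W)]
   = [set M *m B0 | M in [set M : 'M[F]_(\rank W) | \rank M == \rank W]].
  apply/setP => A; rewrite inE; apply/andP/imsetP.
    move=> [rA]; rewrite subspE => /andP[AW _].
    have AB : (A <= B0)%MS by rewrite eq_row_base.
    exists (A *m pinvmx B0); last by rewrite mulmxKpV.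
    by rewrite inE -(mxrankMfree _ fB0) mulmxKpV.
  move=> [M]; rewrite inE => rM ->; split.
    by rewrite mxrankMfree.
  rewrite subspE.
  have uM : row_full M by rewrite /row_full (eqP rM).
  by apply/andP; split; rewrite (eqmxMfull B0 uM) eq_row_base ?submx_refl.
rewrite card_in_imset //.
by move=> M1 M2 _ _; apply: (row_free_inj fB0).
Qed.

Definition Ssp k n := [set subsp W | W in [set W : 'M[F]_n | \rank W == k]].

Lemma card_part k n :
  #|[set A : 'M[F]_(k, n) | \rank A == k]| = (#|Ssp k n| * #|[set M : 'M[F]_k | \rank M == k]|)%N.
Proof.
rewrite -sum1_card (partition_big (@subsp k n) (mem (Ssp k n))) /=; last first.
  move=> A; rewrite inE => rA; apply/imsetP; exists <<A>>%MS.
    by rewrite inE mxrank_gen.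
  by apply/eqP; rewrite subspE genmxE; apply/andP; split; rewrite ?submx_refl ?genmxE.
rewrite -sum_nat_const; apply: eq_bigr => S /imsetP[W]; rewrite inE => /eqP rW ->.
rewrite -(fiber rW) -sum1_card; apply: eq_bigl => A; rewrite !inE.
by [].
Qed.

Definition transl n (p : 'rV[F]_n) (U : {set 'rV[F]_n}) := [set x | x - p \in U].

Lemma aff_through k n (p : 'rV[F]_n) :
  [set S | affine_kspace k S & p \in S] = [set transl p U | U in Ssp k n].
Proof.
apply/setP => S; rewrite inE; apply/andP/imsetP.
  move=> [/existsP[v /existsP[W /andP[rW /eqP->]]]]; rewrite inE => pv.
  exists (subsp W); first by apply/imsetP; exists W; rewrite ?inE.
  apply/setP => x; rewrite !inE.
  have -> : x - v = (x - p) + (p - v) by rewrite addrA subrK.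
  apply/idP/idP => H; last by rewrite addmx_sub.
  have -> : x - p = (x - p + (p - v)) - (p - v) by rewrite addrK.
  by rewrite addmx_sub // eqmx_opp.
move=> [U /imsetP[W]]; rewrite inE => rW -> ->; split.
  apply/existsP; exists p; apply/existsP; exists W; rewrite rW /=.
  by apply/eqP/setP => x; rewrite !inE.
by rewrite !inE subrr sub0mx.
Qed.

Lemma card_aff_through k n (p : 'rV[F]_n) :
  #|[set S | affine_kspace k S & p \in S]| = #|Ssp k n|.
Proof.
rewrite aff_through card_in_imset // => U1 U2 _ _ E.
apply/setP => x; have := congr1 (fun S : {set 'rV[F]_n} => x + p \in S) E.
by rewrite /transl !inE addrK.
Qed.

Lemma card_L (R : realType) k n (L : {set {set 'rV[F]_n}}) (c : 'rV[F]_n -> R) :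
  (forall S, S \in L -> affine_kspace k S) ->
  (forall S, affine_kspace k S -> ((S \in L)%:R : R) = \sum_(p in S) c p) ->
  (#|L|%:R : R) = (\sum_p c p) * #|Ssp k n|%:R.
Proof.
move=> LA LC.
have -> : (#|L|%:R : R) = \sum_(S | affine_kspace k S) ((S \in L)%:R : R).
  rewrite -sumr_const big_mkcond [RHS]big_mkcond /=; apply: eq_bigr => S _.
  by case: ifP => SL; [rewrite LA | case: ifP].
rewrite (eq_bigr _ (fun S => LC S)) big_mkcond /=.
have -> : \sum_S (if affine_kspace k S then \sum_(p in S) c p else 0)
  = \sum_S \sum_p ((affine_kspace k S && (p \in S))%:R * c p).
  apply: eq_bigr => S _; case: ifP => _; last by rewrite big1 // => p _; rewrite mul0r.
  by rewrite big_mkcond; apply: eq_bigr => p _; case: (p \in S); rewrite ?mul1r ?mul0r.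
rewrite exchange_big mulr_suml; apply: eq_bigr => p _.
rewrite -mulr_suml mulrC -(card_aff_through k p); congr (_ * _).
rewrite -sumr_const [RHS]big_mkcond; apply: eq_bigr => S _; rewrite inE.
by case: (_ && _).
Qed.
End Count.
Lemma gauss_eq (R : realType) (q n k s : nat) : (1 < q)%N -> (k <= n)%N ->
  (\prod_(0 <= i < k) (q ^ i * (q ^ (n - i) - 1)))%N =
  (s * \prod_(0 <= i < k) (q ^ i * (q ^ (k - i) - 1)))%N ->
  s%:R = gauss_binom R q n k.
Proof.
move=> q1 kn E.
have qi0 : forall j, (0 < j)%N -> ((q ^ j)%:R - 1 : R) != 0.
  move=> j j0; rewrite subr_eq0 pnatr_eq1 neq_ltn.
  by apply/orP; right; rewrite -{1}(expn0 q) ltn_exp2l.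
have qp : forall i, ((q ^ i)%:R : R) != 0 by move=> i; rewrite pnatr_eq0 expn_eq0 negb_and; apply/orP; left; rewrite -lt0n ltnW.
have E' := congr1 (fun z : nat => (z%:R : R)) E; move: E' => /=.
rewrite natrM !natr_prod !big_mkord.
rewrite [X in _ = _ * X](reindex_inj rev_ord_inj) /=.
have H1 : forall i : 'I_k, ((q ^ i * (q ^ (n - i) - 1))%N%:R : R) = (q ^ i)%:R * ((q ^ (n - i))%:R - 1).
  by move=> i; rewrite natrM natrB // expn_gt0 ltnW.
have H2 : forall i : 'I_k, ((q ^ (k - i.+1) * (q ^ (k - (k - i.+1)) - 1))%N%:R : R) = (q ^ (k - i.+1))%:R * ((q ^ i.+1)%:R - 1).
  move=> i; rewrite subKn ?ltn_ord // natrM natrB //.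
  by rewrite expn_gt0 ltnW.
rewrite (eq_bigr _ (fun i _ => H1 i)) (eq_bigr _ (fun i _ => H2 i)) !big_split /=.
have P : \prod_(i < k) ((q ^ (k - i.+1))%:R : R) = \prod_(i < k) (q ^ i)%:R.
  rewrite (reindex_inj rev_ord_inj) /=; apply: eq_bigr => i _.
  by rewrite subnSK // subKn // ltnW.
rewrite P.
move=> E2; rewrite /gauss_binom prodf_div.
set A := \prod_(i < k) ((q ^ i)%:R : R) in E2 *.
set B := \prod_(i < k) (((q ^ (n - i))%:R : R) - 1) in E2 *.
set C := \prod_(i < k) (((q ^ i.+1)%:R : R) - 1) in E2 *.
have A0 : A != 0 by apply/prodf_neq0 => i _.
have C0 : C != 0 by apply/prodf_neq0 => i _; apply: qi0.
rewrite -[LHS](mulfK C0); congr (_ / _); apply: (mulfI A0).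
by rewrite E2 mulrCA.
Qed.

Section Three.
Variables (F : finFieldType) (m : nat).
Local Notation n := (3 + m)%N.

Definition Wd (d : 'rV[F]_3) : 'M[F]_(1 + 2 + m, 3 + m) :=
  block_mx (col_mx d 0 : 'M[F]_(1 + 2, 3)) 0 0 1%:M.

Lemma rank_Wd d : d != 0 -> \rank (Wd d) = m.+1.
Proof.
move=> d0; rewrite /Wd rank_diag_block_mx mxrank1.
have := @rank_col_mx0 _ 1 3 2 d; rewrite rank_rV d0 => ->; by [].
Qed.

Lemma subWd d (u : 'rV[F]_n) : (u <= Wd d)%MS = (lsubmx u <= d)%MS.
Proof.
apply/idP/idP.
  case/submxP => z ->; rewrite -[z]hsubmxK /Wd mul_row_block row_mxKl.
  rewrite !mulmx0 addr0 -[lsubmx z]hsubmxK mul_row_col mulmx0 addr0.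
  exact: submxMl.
case/sub_rVP => t E; apply/submxP.
exists (row_mx (row_mx (t%:M : 'M_1) 0 : 'M_(1, 1 + 2)) (rsubmx u)).
rewrite /Wd mul_row_block !mulmx0 addr0 add0r mulmx1 mul_row_col mulmx0 addr0.
by rewrite mul_scalar_mx -E hsubmxK.
Qed.

Definition line (P d : 'rV[F]_3) : {set 'rV[F]_n} :=
  [set y | (y - row_mx P 0 <= Wd d)%MS].

Lemma mem_line P d y : (y \in line P d) = (lsubmx y - P <= d)%MS.
Proof.
rewrite inE subWd; congr (_ <= _)%MS.
by rewrite -[y]hsubmxK opp_row_mx add_row_mx !row_mxKl.
Qed.

Lemma line_aff P d : d != 0 -> affine_kspace m.+1 (line P d).
Proof.
move=> d0; rewrite /affine_kspace; apply/existsP; exists (row_mx P 0); apply/existsP; exists (Wd d).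
by rewrite rank_Wd // eqxx /=; apply/eqP.
Qed.

Variable R : realType.
Variable c : 'rV[F]_n -> R.

Definition c3 (Z : 'rV[F]_3) : R := \sum_(y | lsubmx y == Z) c y.

Lemma sum_c3 : \sum_y c y = \sum_Z c3 Z.
Proof.
rewrite (partition_big (fun y : 'rV[F]_n => lsubmx y) xpredT) //.
Qed.

Lemma sum_line P d : d != 0 ->
  \sum_(y in line P d) c y = \sum_t c3 (P + t *: d).
Proof.
move=> d0.
rewrite (partition_big (fun y : 'rV[F]_n => lsubmx y) xpredT) //=.
have -> : \sum_(Z : 'rV[F]_3) \sum_(y in line P d | lsubmx y == Z) c y
   = \sum_(Z in [set P + t *: d | t in [set: F]]) c3 Z.
  rewrite [RHS]big_mkcond; apply: eq_bigr => Z _.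
  have -> : (Z \in [set P + t *: d | t in [set: F]]) = (Z - P <= d)%MS.
    apply/imsetP/sub_rVP => [[t _ ->]|[t E]]; first by exists t; rewrite addrC addKr.
    by exists t; [rewrite inE | rewrite -E addrC subrK].
  case: ifP => H.
    by apply: eq_bigl => y; rewrite mem_line; case: eqP => [->|_]; rewrite ?H ?andbF.
  rewrite big1 // => y /andP[H1 /eqP E]; move: H1; rewrite mem_line E H.
  by [].
rewrite big_imset /=; last first.
  move=> t s _ _ /eqP; rewrite (inj_eq (addrI P)) -subr_eq0 -scalerBl scaler_eq0.
  by rewrite (negPf d0) orbF subr_eq0 => /eqP.
by apply: eq_bigl => t; rewrite inE.
Qed.

Lemma sum_constT (T : finType) (a : R) : \sum_(i : T) a = #|T|%:R * a.
Proof. by rewrite sumr_const mulr_natl. Qed.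
Lemma sum_constP (T : finType) (P : pred T) (a : R) : \sum_(i | P i) a = #|P|%:R * a.
Proof. by rewrite sumr_const mulr_natl. Qed.

Definition xx := \sum_Z c3 Z.
Definition QQ := \sum_Z c3 Z ^+ 2.
Definition gg (w : 'rV[F]_3) := \sum_Z c3 Z * c3 (Z + w).
Definition chi (P d : 'rV[F]_3) := \sum_t c3 (P + t *: d).

Lemma transl_sum (w : 'rV[F]_3) (f : 'rV[F]_3 -> R) : \sum_P f (P + w) = \sum_P f P.
Proof. by rewrite [RHS](reindex_inj (addIr w)). Qed.

Lemma gg0 : gg 0 = QQ.
Proof. by apply: eq_bigr => Z _; rewrite addr0 expr2. Qed.

Lemma key (D : pred 'rV[F]_3) :
  (forall a d, a != 0 -> D (a *: d) = D d) ->
  (forall P d, D d -> chi P d ^+ 2 = chi P d) ->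
  #|F|%:R * (#|D|%:R * xx) =
  #|F|%:R * (#|D|%:R * QQ) + #|F|%:R * (#|F|.-1%:R * \sum_(w | D w) gg w).
Proof.
move=> Dsc Dchi.
have L1 : \sum_(d | D d) \sum_P chi P d = #|F|%:R * (#|D|%:R * xx).
  rewrite mulrCA -sum_constP; apply: eq_bigr => d _.
  rewrite /chi exchange_big /= -sum_constT; apply: eq_bigr => t _.
  by rewrite (transl_sum (t *: d) c3).
rewrite -L1 -[LHS](eq_bigr _ (fun d Dd => eq_bigr _ (fun P _ => Dchi P d Dd))).
have E1 : forall d, \sum_P chi P d ^+ 2 = \sum_t \sum_s gg ((s - t) *: d).
  move=> d; rewrite (eq_bigr (fun P => \sum_t \sum_s c3 (P + t *: d) * c3 (P + s *: d))); last first.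
    by move=> P _; rewrite expr2 /chi big_distrlr.
  rewrite exchange_big; apply: eq_bigr => t _; rewrite exchange_big; apply: eq_bigr => s _.
  rewrite -(transl_sum (- (t *: d))); apply: eq_bigr => P _.
  rewrite subrK scalerBl; congr (_ * c3 _); by rewrite addrAC addrA.
rewrite (eq_bigr _ (fun d _ => E1 d)) exchange_big /= -mulrDr -(sum_constT F).
apply: eq_bigr => t _.
rewrite exchange_big (bigD1 t) //= subrr.
rewrite (eq_bigr (fun _ => QQ)) ?sum_constP; last by move=> d _; rewrite scale0r gg0.
congr (_ + _).
rewrite (eq_bigr (fun _ => \sum_(w | D w) gg w)); last first.
  move=> s st; have a0 : s - t != 0 by rewrite subr_eq0.
  rewrite [RHS](reindex_inj (scalerI a0)) /=; apply: eq_bigl => d.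
  by rewrite Dsc.
by rewrite sum_constP cardC1.
Qed.

Variable L : {set {set 'rV[F]_n}}.
Hypothesis HC : forall S, affine_kspace m.+1 S -> ((S \in L)%:R : R) = \sum_(p in S) c p.

Lemma chiL P d : d != 0 -> chi P d = ((line P d \in L)%:R : R).
Proof. by move=> d0; rewrite HC ?line_aff // sum_line. Qed.

Lemma chi2 P d : d != 0 -> chi P d ^+ 2 = chi P d.
Proof. by move=> d0; rewrite chiL //; case: (_ \in _); rewrite ?expr1n ?expr0n. Qed.

Definition i0 : 'I_3 := ord0.
Definition i2 : 'I_3 := @Ordinal 3 2 isT.
Definition e0 : 'rV[F]_3 := delta_mx 0 i0.

Lemma e0_neq0 : e0 != 0.
Proof. by apply/negP => /eqP/matrixP/(_ 0 i0); rewrite !mxE eqxx /= => /eqP; rewrite oner_eq0. Qed.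

Definition xh (h : F) := \sum_(Z : 'rV[F]_3 | Z 0 i2 == h) c3 Z.

Lemma sum_slices (f : 'rV[F]_3 -> R) :
  \sum_Z f Z = \sum_(P : 'rV[F]_3 | P 0 i0 == 0) \sum_t f (P + t *: e0).
Proof.
rewrite exchange_big /= (partition_big (fun Z : 'rV[F]_3 => Z 0 i0) xpredT) //=.
apply: eq_bigr => t _.
rewrite (reindex_inj (addIr (t *: e0))) /=; apply: eq_bigl => P.
by rewrite !mxE eqxx /= mulr1 -{2}[t]add0r (inj_eq (addIr t)).
Qed.

Lemma xh_nat h : xh h = (\sum_(P : 'rV[F]_3 | (P 0 i0 == 0) && (P 0 i2 == h)) (line P e0 \in L) : nat)%:R.
Proof.
rewrite natr_sum /xh big_mkcond /= sum_slices big_mkcondr /=.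
apply: eq_bigr => P _.
have E : forall t, (P + t *: e0) 0 i2 = P 0 i2 by move=> t; rewrite !mxE /= mulr0 addr0.
rewrite (eq_bigr (fun t => if P 0 i2 == h then c3 (P + t *: e0) else 0)); last first.
  by move=> t _; rewrite E.
case: eqP => _; last by rewrite big1.
by rewrite -chiL ?e0_neq0.
Qed.

Lemma sum_xh : xx = \sum_h xh h.
Proof. by rewrite /xx (partition_big (fun Z : 'rV[F]_3 => Z 0 i2) xpredT). Qed.


Lemma sum_gg : \sum_w gg w = xx ^+ 2.
Proof.
rewrite /gg exchange_big /= expr2 /xx mulr_suml; apply: eq_bigr => Z _.
rewrite -mulr_sumr; congr (_ * _).
by rewrite (eq_bigr (fun w => c3 (w + Z))) ?(transl_sum Z c3) // => w _; rewrite addrC.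
Qed.

Lemma sumA : \sum_(w | w != 0) gg w = xx ^+ 2 - QQ.
Proof. by rewrite -sum_gg [in RHS](bigD1 0) //= gg0 [QQ + _]addrC addrK. Qed.

Lemma sum_gg2 : \sum_(w : 'rV[F]_3 | w 0 i2 == 0) gg w = \sum_h xh h ^+ 2.
Proof.
rewrite /gg exchange_big /=.
rewrite (eq_bigr (fun Z => c3 Z * xh (Z 0 i2))); last first.
  move=> Z _; rewrite -mulr_sumr; congr (_ * _).
  rewrite /xh [RHS](reindex_inj (addrI Z)) /=; apply: eq_bigl => w.
  by rewrite !mxE -{2}[Z 0 i2]addr0 (inj_eq (addrI _)).
rewrite (partition_big (fun Z : 'rV[F]_3 => Z 0 i2) xpredT) //=.
apply: eq_bigr => h _; rewrite expr2 /xh mulr_suml; apply: eq_bigr => Z /eqP ->.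
by [].
Qed.

Lemma sumB : \sum_(w : 'rV[F]_3 | (w != 0) && (w 0 i2 == 0)) gg w = \sum_h xh h ^+ 2 - QQ.
Proof.
rewrite -sum_gg2 [in RHS](bigD1 0) ?mxE //= gg0 [QQ + _]addrC addrK; apply: eq_bigl => w.
by rewrite andbC.
Qed.

Lemma cardA : #|[pred d : 'rV[F]_3 | d != 0]| = (#|F| ^ 3).-1.
Proof.
by rewrite -(card_mx F 1 3) -(cardC1 (0 : 'rV[F]_3)); apply: eq_card => d; rewrite !inE.
Qed.

Lemma card_plane : #|[pred d : 'rV[F]_3 | d 0 i2 == 0]| = (#|F| ^ 2)%N.
Proof.
have q0 : (0 < #|F|)%N by apply/card_gt0P; exists 0.
apply/eqP; rewrite -(eqn_pmul2r q0) -expnSr -(card_mx F 1 3).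
rewrite -[#|'rV[F]_3|]sum1_card (partition_big (fun d : 'rV[F]_3 => d 0 i2) xpredT) //=.
rewrite mulnC -sum_nat_const; apply/eqP; apply: eq_bigr => h _.
rewrite -sum1_card [RHS](reindex_inj (addIr (h *: (delta_mx 0 i2 : 'rV[F]_3)))) /=.
apply: eq_bigl => d; rewrite !mxE eqxx /= mulr1 -{2}[h]add0r (inj_eq (addIr h)).
by rewrite inE.
Qed.

Lemma cardB : #|[pred d : 'rV[F]_3 | (d != 0) && (d 0 i2 == 0)]| = (#|F| ^ 2).-1.
Proof.
rewrite -card_plane [in RHS](cardD1 0) [0 \in _]inE /= mxE eqxx add1n /=.
by apply: eq_card => d; rewrite !inE.
Qed.


Lemma bin2R (k : nat) : (k%:R : R) ^+ 2 - k%:R = 2 * ('C(k, 2))%:R.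
Proof.
elim: k => [|k IH]; first by rewrite bin0n expr0n /= subrr mulr0.
rewrite binS bin1 natrD mulrDr -IH -addn1 natrD; ring.
Qed.

Lemma main3 : exists t : int, xx * (xx - 1) / 2 = (#|F|.+1)%:R * t%:~R.
Proof.
have q1 : (1 < #|F|)%N.
  by apply/card_gt1P; exists 0, 1; split => //; rewrite eq_sym oner_neq0.
have Dsc1 : forall a (d : 'rV[F]_3), a != 0 -> [pred d | d != 0] (a *: d) = [pred d | d != 0] d.
  by move=> a d a0 /=; rewrite scaler_eq0 (negPf a0).
have Dch1 : forall P (d : 'rV[F]_3), [pred d | d != 0] d -> chi P d ^+ 2 = chi P d.
  by move=> P d /= d0; apply: chi2.
have A := key Dsc1 Dch1.
have Dsc2 : forall a (d : 'rV[F]_3), a != 0 ->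
   [pred d : 'rV[F]_3 | (d != 0) && (d 0 i2 == 0)] (a *: d) = [pred d : 'rV[F]_3 | (d != 0) && (d 0 i2 == 0)] d.
  by move=> a d a0 /=; rewrite scaler_eq0 (negPf a0) mxE mulf_eq0 (negPf a0).
have Dch2 : forall P (d : 'rV[F]_3), [pred d : 'rV[F]_3 | (d != 0) && (d 0 i2 == 0)] d -> chi P d ^+ 2 = chi P d.
  by move=> P d /= /andP[d0 _]; apply: chi2.
have B := key Dsc2 Dch2.
rewrite cardA sumA in A; rewrite cardB sumB in B.
have pr : forall j, (((#|F| ^ j).-1)%:R : R) = (#|F|%:R) ^+ j - 1.
  by move=> j; rewrite -subn1 natrB ?expn_gt0 ?(ltnW q1) // natrX.
have pr1 : ((#|F|.-1)%:R : R) = #|F|%:R - 1.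
  by rewrite -subn1 natrB ?(ltnW q1).
rewrite !pr pr1 in A B.
set q : R := #|F|%:R in A B.
set X2 := \sum_h xh h ^+ 2 in B.
have qn0 : q * (q - 1) != 0.
  rewrite mulf_neq0 // /q ?pnatr_eq0 -?lt0n ?(ltnW q1) // subr_eq0 pnatr_eq1.
  by rewrite gtn_eqF.
have K : q * (q - 1) * (xx ^+ 2 - xx - (q + 1) * (X2 - xx)) = 0.
  have -> : q * (q - 1) * (xx ^+ 2 - xx - (q + 1) * (X2 - xx)) =
    (q * ((q ^+ 3 - 1) * QQ) + q * ((q - 1) * (xx ^+ 2 - QQ)) - q * ((q ^+ 3 - 1) * xx))
    - (q + 1) * (q * ((q ^+ 2 - 1) * QQ) + q * ((q - 1) * (X2 - QQ)) - q * ((q ^+ 2 - 1) * xx)).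
    ring.
  by rewrite -A -B !subrr mulr0 subrr.
move/eqP: K; rewrite mulf_eq0 (negPf qn0) /= subr_eq0 => /eqP K.
pose N := (\sum_h 'C(\sum_(P : 'rV[F]_3 | (P 0%R i0 == 0%R) && (P 0%R i2 == h)) (line P e0 \in L), 2))%N.
exists (Posz N).
have E2 : X2 - xx = 2 * N%:R.
  rewrite /X2 sum_xh -sumrB /N natr_sum mulr_sumr; apply: eq_bigr => h _.
  by rewrite xh_nat bin2R.
have -> : ((Posz N)%:~R : R) = N%:R by [].
have two0 : (2 : R) != 0 by rewrite pnatr_eq0.
apply: (mulIf two0); rewrite divfK //.
have -> : ((#|F|.+1)%:R : R) = q + 1 by rewrite -addn1 natrD.
by rewrite -mulrA [N%:R * 2]mulrC -E2 -K expr2 mulrBr mulr1.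
Qed.
End Three.

Lemma card_set_fr (F : finFieldType) k n : (k <= n)%N ->
  #|[set A : 'M[F]_(k, n) | \rank A == k]| =
   (\prod_(0 <= i < k) (#|F| ^ i * (#|F| ^ (n - i) - 1)))%N.
Proof. by move=> kn; rewrite -card_fr //; apply: eq_card => A; rewrite inE. Qed.

Lemma Ssp_neq0 (F : finFieldType) k n : (k <= n)%N -> #|Ssp F k n| != 0%N.
Proof.
move=> kn; rewrite -lt0n; apply/card_gt0P; exists (subsp (pid_mx k : 'M[F]_n)).
by apply/imsetP; exists (pid_mx k : 'M[F]_n); rewrite // inE rank_pid_mx.
Qed.

Theorem theorem6p15 (R : realType) (F : finFieldType) (n : nat)
  (L : {set {set 'rV[F]_n}}) :
  (3 <= n)%N -> CL_kset R (n - 2) L ->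
  exists t : int,
    CL_param R (n - 2) L * (CL_param R (n - 2) L - 1) / 2
      = (#|F|.+1)%:R * t%:~R.
Proof.
case: n L => [|[|[|m]]] L // n3 [LA [c HC]].
have q1 : (1 < #|F|)%N.
  by apply/card_gt1P; exists 0, 1; split => //; rewrite eq_sym oner_neq0.
have kn : (m.+3 - 2 <= m.+3)%N by rewrite leq_subr.
have E := card_L LA HC.
have G : (#|Ssp F (m.+3 - 2)%N m.+3|%:R : R) = gauss_binom R #|F| m.+3 (m.+3 - 2)%N.
  apply: gauss_eq => //.
  by rewrite -!card_set_fr // card_part.
have -> : CL_param R (m.+3 - 2)%N L = @xx F m R c.
  rewrite /CL_param E -G mulfK ?pnatr_eq0 ?Ssp_neq0 //.
  exact: sum_c3.
exact: (main3 HC).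
Qed.
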